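(* Define real sequences by the Gauss–Legendre iteration: $a_0 = 1$, $b_0 = 1/\sqrt{2}$, $s_0 = \tfrac14$, and for $n \ge 0$ \[ a_{n+1} = \frac{a_n+b_n}{2},\quad b_{n+1} = \sqrt{a_n b_n},\quad c_{n+1} = a_n - a_{n+1},\quad s_{n+1} = s_n - 2^n c_{n+1}^2 . \] Define also sequences by the Borwein quartic iteration: $y_0 = \sqrt{2}-1$, $z_0 = 2y_0^2$, and for $n \ge 0$ \[ y_{n+1} = \frac{1-(1-y_n^4)^{1/4}}{1+(1-y_n^4)^{1/4}},\qquad z_{n+1} = z_n(1+y_{n+1})^4 - 2^{2n+3}y_{n+1}(1+y_{n+1}+y_{n+1}^2), \] and set $\pi_n = 1/z_n$. Then for every $n\ge 0$, \[ \pi_n = \frac{a_{2n+1}^2}{s_{2n}}. \]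
   Context: All square roots and fourth roots are the positive real roots; all quantities are computed in exact real arithmetic. *)

(* Defs.v *)
From Stdlib Require Import Reals Lra.
Open Scope R_scope.

Fixpoint gl (n : nat) : R * R * R :=
  match n with
  | O => (1, 1 / sqrt 2, 1 / 4)
  | S m =>
      let '(a, b, s) := gl m in
      let a' := (a + b) / 2 in
      let c' := a - a' in
      (a', sqrt (a * b), s - 2 ^ m * c' ^ 2)
  end.

Definition gl_a (n : nat) : R := fst (fst (gl n)).
Definition gl_b (n : nat) : R := snd (fst (gl n)).
Definition gl_s (n : nat) : R := snd (gl n).
Definition gl_c (n : nat) : R :=
  match n with O => 0 | S m => gl_a m - gl_a (S m) end.  (* c_0 unused *)

Definition root4 (x : R) : R := sqrt (sqrt x).

Fixpoint bw (n : nat) : R * R :=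
  match n with
  | O => (sqrt 2 - 1, 2 * (sqrt 2 - 1) ^ 2)
  | S m =>
      let '(y, z) := bw m in
      let r := root4 (1 - y ^ 4) in
      let y' := (1 - r) / (1 + r) in
      (y', z * (1 + y') ^ 4 - 2 ^ (2 * m + 3) * y' * (1 + y' + y' ^ 2))
  end.

Definition bw_y (n : nat) : R := fst (bw n).
Definition bw_z (n : nat) : R := snd (bw n).
Definition bw_pi (n : nat) : R := 1 / bw_z n.

(* Main.v *)
Require Import Defs.
From Stdlib Require Import Reals Lra Lia.
Open Scope R_scope.

Lemma gl_a_S k : gl_a (S k) = (gl_a k + gl_b k) / 2.
Proof. unfold gl_a, gl_b; simpl; destruct (gl k) as [[a b] s]; reflexivity. Qed.
Lemma gl_b_S k : gl_b (S k) = sqrt (gl_a k * gl_b k).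
Proof. unfold gl_a, gl_b; simpl; destruct (gl k) as [[a b] s]; reflexivity. Qed.
Lemma gl_s_S k : gl_s (S k) = gl_s k - 2 ^ k * (gl_a k - gl_a (S k)) ^ 2.
Proof. unfold gl_a, gl_s; simpl; destruct (gl k) as [[a b] s]; reflexivity. Qed.
Lemma bw_y_S n : bw_y (S n) = (1 - root4 (1 - bw_y n ^ 4)) / (1 + root4 (1 - bw_y n ^ 4)).
Proof. unfold bw_y; simpl; destruct (bw n) as [y z]; reflexivity. Qed.
Lemma bw_z_S n : bw_z (S n) = bw_z n * (1 + bw_y (S n)) ^ 4
   - 2 ^ (2 * n + 3) * bw_y (S n) * (1 + bw_y (S n) + bw_y (S n) ^ 2).
Proof. unfold bw_y, bw_z; simpl; destruct (bw n) as [y z]; reflexivity. Qed.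

Lemma gl_pos k : 0 < gl_a k /\ 0 < gl_b k.
Proof.
  induction k as [|k [Ha Hb]].
  - unfold gl_a, gl_b; simpl. split; [lra|]. apply Rdiv_lt_0_compat; [lra|]. apply sqrt_lt_R0; lra.
  - rewrite gl_a_S, gl_b_S. split; [lra|]. apply sqrt_lt_R0; nra.
Qed.

Lemma inv n : bw_y n ^ 4 = 1 - (gl_b (2*n+1) / gl_a (2*n+1)) ^ 2 /\
   bw_z n = gl_s (2*n) / gl_a (2*n+1) ^ 2.
Proof.
  induction n as [|n [Hy Hz]].
  - replace (2*0+1)%nat with 1%nat by lia. replace (2*0)%nat with 0%nat by lia.
    rewrite gl_a_S, gl_b_S.
    assert (E1 : gl_a 0 = 1) by reflexivity.
    assert (E2 : gl_b 0 = 1 / sqrt 2) by reflexivity.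
    assert (E3 : gl_s 0 = 1 / 4) by reflexivity.
    assert (E4 : bw_y 0 = sqrt 2 - 1) by reflexivity.
    assert (E5 : bw_z 0 = 2 * (sqrt 2 - 1) ^ 2) by reflexivity.
    rewrite E1, E2, E3, E4, E5.
    set (r := sqrt 2).
    assert (Hr : r * r = 2) by (apply sqrt_sqrt; lra).
    assert (Hr0 : 0 < r) by (apply sqrt_lt_R0; lra).
    set (t := sqrt (1 * (1 / r))).
    assert (Ht : t * t = 1 / r).
    { unfold t. rewrite Rmult_1_l. apply sqrt_sqrt. unfold Rdiv. rewrite Rmult_1_l. left; apply Rinv_0_lt_compat; lra. }
    split.
    + replace ((t / ((1 + 1 / r) / 2)) ^ 2) with ((t*t) / ((1 + 1 / r) / 2) ^ 2) by (field; lra).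
      rewrite Ht. field_simplify; try lra. assert (H2 : r^2 = 2) by nra. assert (H3 : r^3 = 2*r) by nra. assert (H4 : r^4 = 4) by nra. rewrite H2, H3, H4. field_simplify_eq; [nra| nra].
    + field_simplify; try lra. assert (H2 : r^2 = 2) by nra. rewrite H2. field_simplify_eq; [nra| nra].
  - replace (2 * S n + 1)%nat with (S (S (S (2*n)))) by lia.
    replace (2 * S n)%nat with (S (S (2*n))) by lia.
    replace (2*n+1)%nat with (S (2*n)) in Hy, Hz by lia.
    rewrite bw_z_S, Hz.
    rewrite !gl_s_S, bw_y_S, Hy.
    replace (2 * n + 3)%nat with (2*n + 3)%nat by lia.
    rewrite pow_add.
    destruct (gl_pos (2*n)) as [Ha0 Hb0].
    set (k := (2*n)%nat) in *.
    change (2 ^ S k) with (2 * 2 ^ k).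
    set (X := 2 ^ k).
    assert (HX : 0 < X) by (apply pow_lt; lra).
    rewrite (gl_a_S (S (S k))), (gl_b_S (S (S k))), (gl_a_S (S k)), (gl_b_S (S k)).
    rewrite ?(gl_a_S (S k)).
    rewrite ?(gl_a_S k), ?(gl_b_S k).
    set (a0 := gl_a k) in *. set (b0 := gl_b k) in *.
    set (A := (a0 + b0) / 2) in *. set (B := sqrt (a0 * b0)) in *.
    assert (HB2 : B * B = a0 * b0) by (apply sqrt_sqrt; apply Rmult_le_pos; [lra|nra]).
    assert (HB0 : 0 < B) by (apply sqrt_lt_R0; nra).
    assert (HA0 : 0 < A) by (unfold A; lra).
    set (p := sqrt A). set (q := sqrt B).
    assert (Hp : p * p = A) by (apply sqrt_sqrt; lra).
    assert (Hq : q * q = B) by (apply sqrt_sqrt; lra).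
    assert (Hp0 : 0 < p) by (apply sqrt_lt_R0; lra).
    assert (Hq0 : 0 < q) by (apply sqrt_lt_R0; lra).
    assert (Hr : root4 (1 - (1 - (B / A) ^ 2)) = q / p).
    { unfold root4. replace (1 - (1 - (B / A) ^ 2)) with ((B/A)^2) by ring.
      rewrite sqrt_pow2 by (apply Rlt_le, Rdiv_lt_0_compat; lra).
      unfold p, q. apply sqrt_div; lra. }
    rewrite Hr.
    assert (Hpq : sqrt (A * B) = p * q) by (unfold p, q; apply sqrt_mult; lra).
    rewrite Hpq.
    assert (Hc : (a0 - A)^2 = A^2 - B*B) by (rewrite HB2; unfold A; field).
    rewrite Hc.
    set (t := sqrt ((A + B) / 2 * (p * q))).
    assert (Ht : t * t = (A + B) / 2 * (p * q)) by (apply sqrt_sqrt; apply Rmult_le_pos; [lra|nra]).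
    replace ((t / (((A + B) / 2 + p * q) / 2)) ^ 2) with (t * t / (((A + B) / 2 + p * q) / 2) ^ 2)
      by (field; nra).
    rewrite Ht. clearbody t.
    clearbody p q. rewrite <- Hp, <- Hq.
    split; field; nra.
Qed.

Theorem corollary1 : forall n : nat,
  bw_pi n = gl_a (2 * n + 1) ^ 2 / gl_s (2 * n).
Proof.
  intro n. unfold bw_pi. destruct (inv n) as [_ Hz]. rewrite Hz.
  destruct (gl_pos (2*n+1)) as [Ha _].
  destruct (Req_dec (gl_s (2*n)) 0) as [H0|H0].
  - rewrite H0. unfold Rdiv. rewrite Rmult_0_l, Rinv_0, Rmult_0_r. ring.
  - field. split; [exact H0|lra].
Qed.
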